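(* Let $N \ge 1$ and let $-1 \le \tau_0 < \tau_1 < \cdots < \tau_N \le 1$ be distinct points. Let $x$ be continuously differentiable on $[-1,+1]$ and let $x^N \in \mathcal{P}_N$ be the unique polynomial with $x^N(\tau_k) = x(\tau_k)$ for $0 \le k \le N$. Then \[ \|\dot{x}-\dot{x}^N\| \le (1+2N^2)\inf_{q\in\mathcal{P}_N}\|\dot{x}-\dot{q}\| + N^2(1+\Lambda_N)\inf_{p\in\mathcal{P}_N}\|x-p\|, \] where $\Lambda_N$ is the Lebesgue constant of the point set $\{\tau_0,\dots,\tau_N\}$.
   Context: $\mathcal{P}_N$ denotes the space of real polynomials of degree at most $N$, and $\|\cdot\|$ denotes the sup-norm on $[-1,+1]$. A dot denotes differentiation. For a point set $\{\tau_0,\dots,\tau_N\}$ the Lagrange polynomials are $L_i(\tau)=\prod_{j=0,\,j\ne i}^N \frac{\tau-\tau_j}{\tau_i-\tau_j}$, $0\le i\le N$, and the Lebesgue constant is $\Lambda_N=\max\{\sum_{j=0}^N |L_j(\tau)| : \tau\in[-1,1]\}$. *)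

(* Defs.v *)
From Stdlib Require Import Reals Lra Lia ClassicalEpsilon.
Open Scope R_scope.

(* Least upper bound of a set of reals (chosen classically; meaningful
   whenever the set is nonempty and bounded above). *)
Definition lub_of (E : R -> Prop) : R :=
  epsilon (inhabits 0) (fun l => is_lub E l).

Definition glb_of (E : R -> Prop) : R :=
  - lub_of (fun y => E (- y)).

Definition sup_norm (f : R -> R) : R :=
  lub_of (fun y => exists t, -1 <= t <= 1 /\ y = Rabs (f t)).

Definition poly_eval (N : nat) (c : nat -> R) (t : R) : R :=
  sum_f_R0 (fun k => c k * t ^ k) N.

Definition poly_deriv (N : nat) (c : nat -> R) (t : R) : R :=
  sum_f_R0 (fun k => INR k * c k * t ^ (pred k)) N.

Definition has_deriv_on_I (f : R -> R) (t l : R) : Prop :=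
  forall eps, 0 < eps -> exists delta, 0 < delta /\
    forall h, h <> 0 -> Rabs h < delta -> -1 <= t + h <= 1 ->
      Rabs ((f (t + h) - f t) / h - l) < eps.

Definition continuous_on_I_at (g : R -> R) (t : R) : Prop :=
  forall eps, 0 < eps -> exists delta, 0 < delta /\
    forall s, -1 <= s <= 1 -> Rabs (s - t) < delta -> Rabs (g s - g t) < eps.

Definition lagrange (N : nat) (tau : nat -> R) (i : nat) (t : R) : R :=
  prod_f_R0 (fun j => if Nat.eqb j i then 1 else (t - tau j) / (tau i - tau j)) N.

Definition lebesgue_const (N : nat) (tau : nat -> R) : R :=
  lub_of (fun y => exists t, -1 <= t <= 1 /\
    y = sum_f_R0 (fun j => Rabs (lagrange N tau j t)) N).

(* Main.v *)
Require Import Defs.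
From Stdlib Require Import Reals Lra Lia ClassicalEpsilon Classical.
From Coquelicot Require Import Coquelicot.
Open Scope R_scope.


Lemma D_plus (f g : R -> R) (x a b : R) : is_derive f x a -> is_derive g x b ->
  is_derive (fun t => f t + g t) x (a + b).
Proof. intros H1 H2. exact (is_derive_plus _ _ _ _ _ H1 H2). Qed.
Lemma D_mult (f g : R -> R) (x a b : R) : is_derive f x a -> is_derive g x b ->
  is_derive (fun t => f t * g t) x (a * g x + f x * b).
Proof. intros H1 H2. exact (is_derive_mult _ _ _ _ _ H1 H2 Rmult_comm). Qed.
Lemma D_const (a x : R) : is_derive (fun _ : R => a) x 0.
Proof. exact (@is_derive_const R_AbsRing R_NormedModule a x). Qed.
Lemma D_id (x : R) : is_derive (fun t : R => t) x 1.
Proof. exact (@is_derive_id R_AbsRing x). Qed.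
Lemma D_ext_l (f g : R -> R) (x a b : R) : (forall t, f t = g t) -> a = b -> is_derive f x a -> is_derive g x b.
Proof. intros H -> H2. exact (is_derive_ext _ _ _ _ H H2). Qed.
Lemma D_scal (f : R -> R) (x a k : R) : is_derive f x a -> is_derive (fun t => k * f t) x (k * a).
Proof. intros H. exact (is_derive_scal _ _ _ _ H). Qed.
Lemma D_comp (f g : R -> R) (x a b : R) : is_derive f (g x) a -> is_derive g x b ->
  is_derive (fun t => f (g t)) x (b * a).
Proof. intros H1 H2. exact (is_derive_comp _ _ _ _ _ H1 H2). Qed.

Fixpoint sm (n : nat) (f : nat -> R) : R :=
  match n with O => 0 | S m => sm m f + f m end.

Lemma sm_ext n f g : (forall k, (k < n)%nat -> f k = g k) -> sm n f = sm n g.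
Proof. induction n; simpl; intros H; auto. rewrite IHn, H; auto. Qed.
Lemma sm_plus n f g : sm n (fun k => f k + g k) = sm n f + sm n g.
Proof. induction n; simpl; [lra|]. rewrite IHn; lra. Qed.
Lemma sm_scal n a f : sm n (fun k => a * f k) = a * sm n f.
Proof. induction n; simpl; [lra|]. rewrite IHn; lra. Qed.
Lemma sm_opp n f : sm n (fun k => - f k) = - sm n f.
Proof. induction n; simpl; [lra|]. rewrite IHn; lra. Qed.
Lemma sm_zero n : sm n (fun _ => 0) = 0.
Proof. induction n; simpl; [lra|]. rewrite IHn; lra. Qed.
Lemma sm_le n f g : (forall k, (k < n)%nat -> f k <= g k) -> sm n f <= sm n g.
Proof. induction n; simpl; intros H; [lra|]. pose proof (H n (Nat.lt_succ_diag_r n)).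
  assert (sm n f <= sm n g) by (apply IHn; intros; apply H; lia). lra. Qed.
Lemma sm_nonneg n f : (forall k, (k < n)%nat -> 0 <= f k) -> 0 <= sm n f.
Proof. intros H. rewrite <- (sm_zero n). apply sm_le. auto. Qed.
Lemma sm_abs n f : Rabs (sm n f) <= sm n (fun k => Rabs (f k)).
Proof. induction n; simpl. rewrite Rabs_R0; lra.
  eapply Rle_trans. apply Rabs_triang. lra. Qed.
Lemma sm_shift n f : sm (S n) f = f O + sm n (fun k => f (S k)).
Proof. induction n; simpl in *; [lra|]. rewrite IHn; lra. Qed.
Lemma sm_rev n f : sm n f = sm n (fun k => f (n - 1 - k)%nat).
Proof. induction n. reflexivity.
  rewrite (sm_shift n (fun k => f (S n - 1 - k)%nat)). change (sm n f + f n = f (S n - 1 - 0)%nat + sm n (fun k => f (S n - 1 - S k)%nat)).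
  rewrite IHn.
  replace (S n - 1 - 0)%nat with n by lia.
  rewrite Rplus_comm. f_equal. apply sm_ext. intros k Hk. f_equal. lia. Qed.
Lemma sm_add n m f : sm (n + m) f = sm n f + sm m (fun k => f (n + k)%nat).
Proof. induction m; simpl. rewrite Nat.add_0_r; lra.
  rewrite Nat.add_succ_r. simpl. rewrite IHm; lra. Qed.
Lemma sm_single n f i : (i < n)%nat -> (forall k, (k < n)%nat -> k <> i -> f k = 0) -> sm n f = f i.
Proof. induction n; intros Hi H. lia. simpl.
  destruct (Nat.eq_dec i n) as [->|Hne].
  - rewrite (sm_ext n f (fun _ => 0)). rewrite sm_zero; lra. intros k Hk; apply H; lia.
  - rewrite IHn; [| lia | intros; apply H; lia]. rewrite (H n); [lra|lia|lia]. Qed.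

Lemma sum_f_R0_sm f n : sum_f_R0 f n = sm (S n) f.
Proof. induction n; simpl in *. lra. rewrite IHn. reflexivity. Qed.

Definition psum (n : nat) (c : nat -> R) (t : R) : R := sm n (fun k => c k * t ^ k).
Definition P (n : nat) (f : R -> R) : Prop := exists c, forall t, f t = psum n c t.

Lemma psum_deriv n c t :
  is_derive (psum (S n) c) t (psum n (fun k => INR (S k) * c (S k)) t).
Proof.
  induction n.
  - unfold psum; simpl. eapply D_ext_l; [| | apply (D_const (c O))].
    intros; simpl; ring. ring.
  - eapply D_ext_l; [| | apply D_plus; [apply IHn | apply D_scal; apply (is_derive_pow (fun t => t) (S n) t 1 (D_id t))]].
    intros s. reflexivity.
    change (psum n (fun k => INR (S k) * c (S k)) t + c (S n) * (INR (S n) * 1 * t ^ Init.Nat.pred (S n)) =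
      psum n (fun k => INR (S k) * c (S k)) t + INR (S n) * c (S n) * t ^ n).
    simpl pred. ring.
Qed.

Lemma poly_eval_psum N c t : poly_eval N c t = psum (S N) c t.
Proof. unfold poly_eval, psum. apply sum_f_R0_sm. Qed.

Lemma poly_deriv_psum N c t : poly_deriv N c t = psum N (fun k => INR (S k) * c (S k)) t.
Proof. unfold poly_deriv, psum. rewrite sum_f_R0_sm, sm_shift. simpl INR. rewrite Rmult_0_l, Rmult_0_l, Rplus_0_l.
  apply sm_ext. intros k _. simpl pred. ring. Qed.

Lemma poly_eval_deriv N c t : is_derive (poly_eval N c) t (poly_deriv N c t).
Proof. rewrite poly_deriv_psum. eapply D_ext_l; [| reflexivity| apply psum_deriv].
  intros; rewrite poly_eval_psum; reflexivity. Qed.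

Lemma P_ext n f g : (forall t, f t = g t) -> P n f -> P n g.
Proof. intros H [c Hc]. exists c. intros t. rewrite <- H. auto. Qed.
Lemma P_zero n : P n (fun _ => 0).
Proof. exists (fun _ => 0). intros t. unfold psum. rewrite (sm_ext n _ (fun _ => 0)). rewrite sm_zero; auto.
  intros; ring. Qed.
Lemma P_plus n f g : P n f -> P n g -> P n (fun t => f t + g t).
Proof. intros [c Hc] [d Hd]. exists (fun k => c k + d k). intros t. rewrite Hc, Hd. unfold psum.
  rewrite <- sm_plus. apply sm_ext; intros; ring. Qed.
Lemma P_scal n a f : P n f -> P n (fun t => a * f t).
Proof. intros [c Hc]. exists (fun k => a * c k). intros t. rewrite Hc. unfold psum.
  rewrite <- sm_scal. apply sm_ext; intros; ring. Qed.
Lemma P_opp n f : P n f -> P n (fun t => - f t).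
Proof. intros H. apply (P_ext n (fun t => -1 * f t)). intros; ring. apply P_scal; auto. Qed.
Lemma P_minus n f g : P n f -> P n g -> P n (fun t => f t - g t).
Proof. intros H1 H2. apply (P_ext n (fun t => f t + - g t)). intros; ring. apply P_plus; auto. apply P_opp; auto. Qed.
Lemma P_S n f : P n f -> P (S n) f.
Proof. intros [c Hc]. exists (fun k => if Nat.eqb k n then 0 else c k). intros t. rewrite Hc.
  unfold psum. simpl. rewrite Nat.eqb_refl. rewrite Rmult_0_l, Rplus_0_r. apply sm_ext.
  intros k Hk. destruct (Nat.eqb_spec k n); [lia|auto]. Qed.
Lemma P_le n m f : (n <= m)%nat -> P n f -> P m f.
Proof. induction 1; auto. intros; apply P_S; auto. Qed.
Lemma P_const a : P 1 (fun _ => a).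
Proof. exists (fun _ => a). intros t. unfold psum. simpl. ring. Qed.
Lemma P_mul_t n f : P n f -> P (S n) (fun t => t * f t).
Proof. intros [c Hc]. exists (fun k => match k with O => 0 | S j => c j end). intros t. rewrite Hc.
  unfold psum. rewrite sm_shift. rewrite <- sm_scal. simpl. rewrite Rmult_0_l, Rplus_0_l.
  apply sm_ext; intros; simpl; ring. Qed.
Lemma P_mul_lin n a f : P n f -> P (S n) (fun t => (t - a) * f t).
Proof. intros H. apply (P_ext _ (fun t => t * f t + - a * f t)). intros; ring.
  apply P_plus. apply P_mul_t; auto. apply P_S, P_scal; auto. Qed.
Lemma P_pow n : P (S n) (fun t => t ^ n).
Proof. induction n. apply (P_ext _ (fun _ => 1)); [intros; simpl; ring| apply P_const].
  apply (P_ext _ (fun t => t * t^n)); [intros; simpl; ring|]. apply P_mul_t; auto. Qed.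
Lemma P_psum n c : P n (psum n c).
Proof. exists c; auto. Qed.

Lemma pow_factor m a : exists h, P m h /\ forall t, t ^ m - a ^ m = (t - a) * h t.
Proof. induction m.
  - exists (fun _ => 0). split. apply P_zero. intros; simpl; ring.
  - destruct IHm as [h [Hh E]]. exists (fun t => t * h t + a ^ m). split.
    apply P_plus. apply P_mul_t; auto. apply (P_le 1). lia. apply P_const.
    intros t. simpl. replace (t * t ^ m - a * a ^ m) with (t * (t^m - a^m) + a^m * (t - a)) by ring.
    rewrite E. ring. Qed.

Lemma P_factor m f a : P (S m) f -> exists g, P m g /\ forall t, f t = (t - a) * g t + f a.
Proof. intros [c Hc]. revert f Hc. induction m; intros f Hc.
  - exists (fun _ => 0). split. apply P_zero. intros t. rewrite !Hc. unfold psum; simpl; ring.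
  - destruct (IHm (psum (S m) c) (fun t => eq_refl)) as [g1 [Hg1 E1]].
    destruct (pow_factor (S m) a) as [h [Hh Eh]].
    exists (fun t => g1 t + c (S m) * h t). split.
    apply P_plus. apply P_S; auto. apply P_scal; auto.
    intros t. rewrite !Hc.
    change (psum (S m) c t + c (S m) * t ^ (S m) = (t - a) * (g1 t + c (S m) * h t) + (psum (S m) c a + c (S m) * a ^ (S m))).
    rewrite (E1 t).
    replace (c (S m) * t ^ S m) with (c (S m) * a ^ (S m) + c (S m) * (t ^ S m - a ^ S m)) by ring.
    rewrite Eh. ring. Qed.

Lemma P_roots n f r : P n f ->
  (forall i j, (i < n)%nat -> (j < n)%nat -> r i = r j -> i = j) ->
  (forall i, (i < n)%nat -> f (r i) = 0) -> forall t, f t = 0.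
Proof. revert f. induction n; intros f Hf Hr Hz t.
  - destruct Hf as [c Hc]. rewrite Hc. reflexivity.
  - destruct (P_factor n f (r n) Hf) as [g [Hg E]].
    assert (forall s, g s = 0) as G.
    { apply IHn; [exact Hg| |]. intros i j Hi Hj Heq; apply Hr; auto; lia.
      intros i Hi. assert (f (r i) = 0) as Fi by (apply Hz; lia). rewrite E, (Hz n) in Fi by lia.
      assert (r i - r n <> 0). { intro Hc. assert (i = n) by (apply Hr; [lia|lia|lra]). lia. }
      rewrite Rplus_0_r in Fi. apply Rmult_integral in Fi. destruct Fi; [contradiction|]. lra. }
    rewrite E, G, (Hz n) by lia. ring. Qed.

Lemma P_deriv n f : P (S n) f -> exists df, P n df /\ forall t, is_derive f t (df t).
Proof. intros [c Hc]. exists (psum n (fun k => INR (S k) * c (S k))). split. apply P_psum.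
  intros t. eapply D_ext_l; [| reflexivity | apply psum_deriv]. intros; rewrite Hc; auto. Qed.

Lemma P_cont n f : P n f -> forall t, continuity_pt f t.
Proof. intros H t. destruct n. destruct H as [c Hc]. apply (continuity_pt_ext (fun _ => 0)).
  intros; rewrite Hc; reflexivity. apply continuity_pt_const. intros a b; auto.
  destruct (P_deriv n f H) as [df [_ Hd]]. apply continuity_pt_filterlim.
  apply (ex_derive_continuous f t). eexists; apply Hd. Qed.

Inductive TP (n : nat) : (R -> R) -> Prop :=
| TPc j : (j <= n)%nat -> TP n (fun x => cos (INR j * x))
| TPs j : (j <= n)%nat -> TP n (fun x => sin (INR j * x))
| TPp f g : TP n f -> TP n g -> TP n (fun x => f x + g x)
| TPm a f : TP n f -> TP n (fun x => a * f x)
| TPe f g : (forall x, f x = g x) -> TP n f -> TP n g.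

Lemma TP_mono n m f : (n <= m)%nat -> TP n f -> TP m f.
Proof. intros Hle H; induction H. apply TPc; lia. apply TPs; lia. apply TPp; auto.
  apply TPm; auto. eapply TPe; eauto. Qed.

Lemma TP_zero n : TP n (fun _ => 0).
Proof. eapply TPe; [|apply (TPm n 0 _ (TPc n 0 (Nat.le_0_l n)))]. intros; simpl; ring. Qed.

Lemma TP_one n : TP n (fun _ => 1).
Proof. eapply TPe; [|apply (TPc n 0 (Nat.le_0_l n))]. intros; simpl. rewrite Rmult_0_l; apply cos_0. Qed.

Lemma TP_shift n a f : TP n f -> TP n (fun x => f (a + x)).
Proof. intros H; induction H.
  - eapply TPe; [| apply TPp; [apply (TPm _ (cos (INR j * a))), (TPc _ j); auto | apply (TPm _ (- sin (INR j * a))), (TPs _ j); auto]].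
    intros x; simpl. rewrite Rmult_plus_distr_l, cos_plus. ring.
  - eapply TPe; [| apply TPp; [apply (TPm _ (sin (INR j * a))), (TPc _ j); auto | apply (TPm _ (cos (INR j * a))), (TPs _ j); auto]].
    intros x; simpl. rewrite Rmult_plus_distr_l, sin_plus. ring.
  - apply TPp; auto.
  - apply TPm; auto.
  - eapply TPe; [| eauto]. intros; simpl; auto. Qed.

Lemma TP_cos_mul n f : TP n f -> TP (S n) (fun x => cos x * f x).
Proof. intros H; induction H.
  - destruct j.
    + eapply TPe; [| apply (TPc (S n) 1); lia]. intros x; simpl. rewrite Rmult_0_l, cos_0, Rmult_1_l. ring.
    + eapply TPe; [| apply TPp; [apply (TPm _ (/2)), (TPc (S n) (S (S j))); lia | apply (TPm _ (/2)), (TPc (S n) j); lia]].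
      intros x. rewrite !S_INR.
      replace ((INR j + 1 + 1) * x) with ((INR j + 1) * x + x) by ring.
      replace (INR j * x) with ((INR j + 1) * x - x) by ring.
      rewrite cos_plus, cos_minus. field.
  - destruct j.
    + eapply TPe; [| apply (TPm _ 0), (TPc (S n) 0); lia]. intros x; simpl. rewrite !Rmult_0_l, sin_0. ring.
    + eapply TPe; [| apply TPp; [apply (TPm _ (/2)), (TPs (S n) (S (S j))); lia | apply (TPm _ (/2)), (TPs (S n) j); lia]].
      intros x. rewrite !S_INR.
      replace ((INR j + 1 + 1) * x) with ((INR j + 1) * x + x) by ring.
      replace (INR j * x) with ((INR j + 1) * x - x) by ring.
      rewrite sin_plus, sin_minus. field.
  - eapply TPe; [| apply (TPp _ _ _ IHTP1 IHTP2)]. intros; simpl; ring.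
  - eapply TPe; [| apply (TPm _ a _ IHTP)]. intros; simpl; ring.
  - eapply TPe; [| eauto]. intros; simpl. rewrite H; auto. Qed.

Lemma TP_cos_pow k : TP k (fun x => cos x ^ k).
Proof. induction k. eapply TPe; [|apply TP_one]. intros; simpl; auto.
  eapply TPe; [|apply TP_cos_mul; eauto]. intros; simpl; auto. Qed.

Lemma TP_sm n m (F : nat -> R -> R) : (forall k, (k < m)%nat -> TP n (F k)) -> TP n (fun x => sm m (fun k => F k x)).
Proof. induction m; intros H. apply TP_zero. simpl. apply TPp. apply IHm; auto. apply H; lia. Qed.

Lemma TP_poly n p : P (S n) p -> TP n (fun x => p (cos x)).
Proof. intros [c Hc]. apply (TPe _ (fun x => psum (S n) c (cos x))); [intros x; rewrite Hc; reflexivity|]. unfold psum.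
  apply (TP_sm n (S n) (fun k x => c k * cos x ^ k)). intros k Hk. apply TPm. apply TP_mono with k. lia. apply TP_cos_pow. Qed.

(* ---------- Riesz interpolation ---------- *)
Section Riesz.
Variable n : nat.
Hypothesis Hn : (1 <= n)%nat.

Definition th (k : nat) : R := (2 * INR k + 1) * PI / (2 * INR n).
Definition w (k : nat) : R := (-1) ^ k / (sin (th k / 2)) ^ 2.
Definition Rf (f : R -> R) : R := sm (2 * n) (fun k => w k * f (th k)).
Definition Dj (j : nat) : R := Rf (fun x => sin (INR j * x)).
Definition Esum : R := sm (2 * n) (fun k => / (sin (th k / 2)) ^ 2).

Lemma INRn_pos : 0 < INR n.
Proof. apply lt_0_INR; lia. Qed.

Lemma sin_th_pos k : (k < 2 * n)%nat -> 0 < sin (th k / 2).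
Proof. intros Hk. pose proof INRn_pos. pose proof PI_RGT_0. apply sin_gt_0.
  - unfold th. assert (0 <= INR k) by apply pos_INR. apply Rmult_lt_0_compat; [|lra].
    apply Rmult_lt_0_compat; [nra|]. apply Rinv_0_lt_compat; lra.
  - unfold th. assert (INR k + 1 <= 2 * INR n). { rewrite <- S_INR. replace 2 with (INR 2) by (simpl; ring). rewrite <- mult_INR. apply le_INR. lia. }
    apply Rmult_lt_reg_r with (4 * INR n); [lra|]. field_simplify; [|lra]. nra. Qed.

Lemma sign_rev k : (k < 2 * n)%nat -> (-1) ^ (2 * n - 1 - k) = - (-1) ^ k.
Proof. intros Hk. assert ((-1) ^ (2 * n - 1 - k) * (-1) ^ k = -1) as E.
  { rewrite <- pow_add. replace (2 * n - 1 - k + k)%nat with (S (2 * (n - 1))) by lia. apply pow_1_odd. }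
  assert ((-1) ^ k * (-1) ^ k = 1) as E2. { rewrite <- pow_add. replace (k + k)%nat with (2 * k)%nat by lia. apply pow_1_even. }
  nra. Qed.

Lemma INR_rev k : (k < 2 * n)%nat -> INR (2 * n - 1 - k) = 2 * INR n - 1 - INR k.
Proof. intros Hk. rewrite !minus_INR by lia. rewrite mult_INR. simpl. ring. Qed.

Lemma th_rev k : (k < 2 * n)%nat -> th (2 * n - 1 - k) = 2 * PI - th k.
Proof. intros Hk. unfold th. rewrite INR_rev by auto. pose proof INRn_pos. field. lra. Qed.

Lemma sin_th_rev k : (k < 2 * n)%nat -> sin (th (2 * n - 1 - k) / 2) = sin (th k / 2).
Proof. intros Hk. rewrite th_rev by auto. replace ((2 * PI - th k) / 2) with (PI - th k / 2) by field.
  apply sin_PI_x. Qed.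

Lemma w_rev k : (k < 2 * n)%nat -> w (2 * n - 1 - k) = - w k.
Proof. intros Hk. unfold w. rewrite sign_rev, sin_th_rev by auto. unfold Rdiv. ring. Qed.

Lemma Rf_cos j : Rf (fun x => cos (INR j * x)) = 0.
Proof. unfold Rf. set (F := fun k => w k * cos (INR j * th k)).
  assert (sm (2 * n) F = - sm (2 * n) F); [|lra].
  rewrite sm_rev at 1. rewrite <- sm_opp. apply sm_ext. intros k Hk. unfold F.
  replace (2 * n - 1 - k)%nat with (2 * n - 1 - k)%nat by lia. rewrite w_rev, th_rev by auto.
  replace (INR j * (2 * PI - th k)) with (- (INR j * th k) + 2 * INR j * PI) by ring.
  rewrite cos_period, cos_neg. ring. Qed.

Lemma cos_kPI k : cos (INR k * PI) = (-1) ^ k.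
Proof. induction k. simpl. rewrite Rmult_0_l; apply cos_0.
  rewrite S_INR. replace ((INR k + 1) * PI) with (INR k * PI + PI) by ring. rewrite neg_cos, IHk. simpl; ring. Qed.

Lemma Dn_E : Dj n = Esum.
Proof. unfold Dj, Rf, Esum. apply sm_ext. intros k Hk. unfold w.
  assert (sin (INR n * th k) = (-1) ^ k) as E.
  { unfold th. replace (INR n * ((2 * INR k + 1) * PI / (2 * INR n))) with (PI / 2 + INR k * PI)
      by (pose proof INRn_pos; field; lra).
    rewrite <- cos_sin. apply cos_kPI. }
  rewrite E. assert ((-1) ^ k * (-1) ^ k = 1) as E2. { rewrite <- pow_add. replace (k + k)%nat with (2 * k)%nat by lia. apply pow_1_even. }
  replace ((-1) ^ k / sin (th k / 2) ^ 2 * (-1) ^ k) with (((-1) ^ k * (-1) ^ k) / sin (th k / 2) ^ 2) by (unfold Rdiv; ring).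
  rewrite E2. unfold Rdiv; ring. Qed.

Lemma Esum_pos : 0 < Esum.
Proof. unfold Esum. replace (2 * n)%nat with (S (2 * n - 1)) by lia.
  match goal with |- 0 < sm (S ?m) ?F => change (0 < sm m F + F m) end.
  assert (0 <= sm (2 * n - 1) (fun k => / sin (th k / 2) ^ 2)).
  { apply sm_nonneg. intros k Hk. pose proof (sin_th_pos k ltac:(lia)).
    left. apply Rinv_0_lt_compat. nra. }
  pose proof (sin_th_pos (2 * n - 1) ltac:(lia)). assert (0 < / sin (th (2 * n - 1) / 2) ^ 2) by (apply Rinv_0_lt_compat; nra).
  lra. Qed.

Lemma telescope (u : nat -> R) m : sm m (fun k => (-1) ^ k * (u (S k) + u k)) = u O - (-1) ^ m * u m.
Proof. induction m; simpl. ring. rewrite IHm. ring. Qed.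

Lemma Sj_zero j : (j < n)%nat -> sm (2 * n) (fun k => (-1) ^ k * sin (INR j * th k)) = 0.
Proof. intros Hj. pose proof INRn_pos. pose proof PI_RGT_0.
  set (b := INR j * PI / (2 * INR n)).
  assert (0 < cos b).
  { apply cos_gt_0. unfold b. assert (0 <= INR j) by apply pos_INR.
    assert (0 <= INR j * PI / (2 * INR n)). { apply Rmult_le_pos. nra. left; apply Rinv_0_lt_compat; lra. } lra.
    unfold b. assert (INR j < INR n) by (apply lt_INR; auto).
    apply Rmult_lt_reg_r with (2 * INR n); [lra|]. field_simplify; nra. }
  set (u := fun k => sin (INR j * INR k * PI / INR n)).
  assert (2 * cos b * sm (2 * n) (fun k => (-1) ^ k * sin (INR j * th k)) = sm (2 * n) (fun k => (-1) ^ k * (u (S k) + u k))) as E.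
  { rewrite <- sm_scal. apply sm_ext. intros k Hk. unfold u. rewrite S_INR.
    replace (INR j * (INR k + 1) * PI / INR n) with (INR j * th k + b) by (unfold th, b; field; lra).
    replace (INR j * INR k * PI / INR n) with (INR j * th k - b) by (unfold th, b; field; lra).
    rewrite sin_plus, sin_minus. ring. }
  rewrite telescope in E. unfold u in E. change (INR 0) with 0 in E.
  rewrite Rmult_0_r, Rmult_0_l, Rdiv_0_l, sin_0 in E.
  replace (INR j * INR (2 * n) * PI / INR n) with (0 + 2 * INR j * PI) in E by (rewrite mult_INR; simpl; field; lra).
  rewrite sin_period, sin_0 in E. assert (cos b * sm (2 * n) (fun k => (-1) ^ k * sin (INR j * th k)) = 0) by lra.
  apply Rmult_integral in H2. destruct H2; lra. Qed.

Lemma Dj_rec j : (S j < n)%nat -> Dj (S (S j)) = 2 * Dj (S j) - Dj j.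
Proof. intros Hj. pose proof (Sj_zero (S j) Hj) as Z.
  assert (Dj (S (S j)) + Dj j - 2 * Dj (S j) = -4 * sm (2 * n) (fun k => (-1) ^ k * sin (INR (S j) * th k))); [|lra].
  unfold Dj, Rf.
  transitivity (sm (2*n) (fun k => w k * sin (INR (S (S j)) * th k) + w k * sin (INR j * th k) + (-2) * (w k * sin (INR (S j) * th k)))).
  { rewrite !sm_plus, sm_scal. ring. }
  rewrite <- sm_scal. apply sm_ext. intros k Hk.
  pose proof (sin_th_pos k Hk). unfold w.
  assert (cos (th k) = 1 - 2 * sin (th k / 2) ^ 2) as C.
  { replace (th k) with (2 * (th k / 2)) at 1 by field. rewrite cos_2a_sin. ring. }
  rewrite !S_INR.
  replace ((INR j + 1 + 1) * th k) with ((INR j + 1) * th k + th k) by ring.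
  replace (INR j * th k) with ((INR j + 1) * th k - th k) by ring.
  rewrite sin_plus, sin_minus, C. field. lra. Qed.

Lemma Dj0 : Dj 0 = 0.
Proof. unfold Dj, Rf. rewrite (sm_ext _ _ (fun _ => 0)). apply sm_zero.
  intros; simpl INR; rewrite Rmult_0_l, sin_0; ring. Qed.

Lemma Dj_lin j : (j <= n)%nat -> Dj j = INR j * Dj 1.
Proof.
  assert (forall j, (j <= n)%nat -> Dj j = INR j * Dj 1 /\ ((S j <= n)%nat -> Dj (S j) = INR (S j) * Dj 1)) as H.
  { clear j. intros j. induction j as [|j IHj]; intros Hj.
    - split. rewrite Dj0. simpl; ring. intros; simpl; ring.
    - destruct (IHj ltac:(lia)) as [H0 H1]. split. auto. intros H2.
      rewrite Dj_rec by lia. rewrite (H1 ltac:(lia)), H0. rewrite !S_INR. ring. }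
  intros Hj. apply H; auto. Qed.

Lemma D1_pos : 0 < Dj 1.
Proof. pose proof Esum_pos. rewrite <- Dn_E in H. rewrite Dj_lin in H by lia. pose proof INRn_pos. nra. Qed.

Lemma Rf_plus f g : Rf (fun x => f x + g x) = Rf f + Rf g.
Proof. unfold Rf. rewrite <- sm_plus. apply sm_ext; intros; ring. Qed.
Lemma Rf_scal a f : Rf (fun x => a * f x) = a * Rf f.
Proof. unfold Rf. rewrite <- sm_scal. apply sm_ext; intros; ring. Qed.

Lemma riesz f : TP n f -> is_derive f 0 (Rf f / Dj 1).
Proof. pose proof D1_pos. intros H1; induction H1.
  - rewrite Rf_cos. eapply D_ext_l; [ | | apply (D_comp cos (fun x => INR j * x))]; [intros; reflexivity | | apply is_derive_cos |].
    2:{ eapply D_ext_l; [| | apply D_scal, D_id]; [intros; reflexivity| reflexivity]. }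
    rewrite Rmult_0_r, sin_0. field. lra.
  - fold (Dj j). rewrite Dj_lin by auto.
    eapply D_ext_l; [ | | apply (D_comp sin (fun x => INR j * x))]; [intros; reflexivity | | apply is_derive_sin |].
    2:{ eapply D_ext_l; [| | apply D_scal, D_id]; [intros; reflexivity| reflexivity]. }
    rewrite Rmult_0_r, cos_0. field. lra.
  - rewrite Rf_plus. eapply D_ext_l; [| | exact (D_plus _ _ _ _ _ IHTP1 IHTP2)]. intros; reflexivity. field; lra.
  - rewrite Rf_scal. eapply D_ext_l; [| | exact (D_scal _ _ _ a IHTP)]. intros; reflexivity. field; lra.
  - replace (Rf g) with (Rf f). eapply D_ext_l; [| | exact IHTP]; auto. unfold Rf. apply sm_ext. intros; f_equal; f_equal; auto. Qed.

Lemma bernstein_trig f M a l : TP n f -> (forall x, Rabs (f x) <= M) -> is_derive f a l -> Rabs l <= INR n * M.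
Proof. intros Hf HM Hd. pose proof D1_pos.
  set (g := fun x => f (a + x)).
  assert (is_derive g 0 l) as Hg.
  { eapply D_ext_l; [| | apply (D_comp f (fun x => a + x))]; [intros; reflexivity | | rewrite Rplus_0_r; eauto |].
    2:{ eapply D_ext_l; [| | apply D_plus; [apply D_const | apply D_id]]; [intros; reflexivity | reflexivity]. }
    ring. }
  pose proof (riesz g (TP_shift n a f Hf)) as R1.
  apply is_derive_unique in Hg. apply is_derive_unique in R1. rewrite Hg in R1. rewrite R1.
  assert (Rabs (Rf g) <= Esum * M).
  { unfold Rf, Esum. eapply Rle_trans. apply sm_abs. rewrite Rmult_comm, <- sm_scal. apply sm_le.
    intros k Hk. pose proof (sin_th_pos k Hk). unfold w. rewrite Rabs_mult. unfold Rdiv. rewrite Rabs_mult, pow_1_abs.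
    rewrite Rabs_inv, Rabs_pos_eq by nra. assert (0 < / sin (th k / 2) ^ 2) by (apply Rinv_0_lt_compat; nra).
    specialize (HM (a + th k)). unfold g. nra. }
  rewrite <- Dn_E, Dj_lin in H0 by lia. unfold Rdiv. rewrite Rabs_mult, Rabs_inv, (Rabs_pos_eq (Dj 1)) by lra.
  apply Rmult_le_reg_r with (Dj 1); auto. field_simplify; [| lra]. nra. Qed.

End Riesz.

Lemma bernstein_alg n p dp M : (1 <= n)%nat -> P (S n) p -> (forall y, is_derive p y (dp y)) ->
  (forall y, -1 <= y <= 1 -> Rabs (p y) <= M) ->
  forall th, Rabs (sin th * dp (cos th)) <= INR n * M.
Proof. intros Hn Hp Hd HM th.
  assert (Rabs (- sin th * dp (cos th)) <= INR n * M).
  { apply (bernstein_trig n Hn (fun x => p (cos x)) M th). apply TP_poly; auto.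
    intros x; apply HM; apply COS_bound.
    eapply D_ext_l; [| | apply (D_comp p cos)]; [intros; reflexivity | | apply Hd | apply is_derive_cos]. ring. }
  replace (sin th * dp (cos th)) with (- (- sin th * dp (cos th))) by ring. rewrite Rabs_Ropp. auto. Qed.

Fixpoint Tch (n : nat) (t : R) : R :=
  match n with
  | O => 1
  | S O => t
  | S ((S k) as m) => 2 * t * Tch m t - Tch k t
  end.

Lemma Tch_cos n x : Tch n (cos x) = cos (INR n * x).
Proof.
  assert (forall n, Tch n (cos x) = cos (INR n * x) /\ Tch (S n) (cos x) = cos (INR (S n) * x)) as H.
  { induction n0. split; simpl. rewrite Rmult_0_l, cos_0; auto. rewrite Rmult_1_l; auto.
    destruct IHn0 as [H1 H2]. split; auto.
    change (Tch (S (S n0)) (cos x)) with (2 * cos x * Tch (S n0) (cos x) - Tch n0 (cos x)).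
    rewrite H1, H2. rewrite !S_INR.
    replace ((INR n0 + 1 + 1) * x) with ((INR n0 + 1) * x + x) by ring.
    replace (INR n0 * x) with ((INR n0 + 1) * x - x) by ring.
    rewrite cos_plus, cos_minus. ring. }
  apply H. Qed.

Lemma Tch_P n : P (S n) (Tch n).
Proof.
  assert (forall n, P (S n) (Tch n) /\ P (S (S n)) (Tch (S n))) as H.
  { induction n0. split. apply (P_ext _ (fun _ => 1)); [intros; reflexivity| apply P_const].
    apply (P_ext _ (fun t => t * 1)). intros; simpl; ring. apply P_mul_t, P_const.
    destruct IHn0 as [H1 H2]. split; auto.
    apply (P_ext _ (fun t => 2 * (t * Tch (S n0) t) - Tch n0 t)). intros; simpl; ring.
    apply P_minus. apply P_scal, P_mul_t; auto. apply (P_le (S n0)); auto; lia. }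
  apply H. Qed.

Lemma P_sm n m (F : nat -> R -> R) : (forall k, (k < m)%nat -> P n (F k)) -> P n (fun t => sm m (fun k => F k t)).
Proof. induction m; intros H. apply P_zero. simpl. apply P_plus. apply IHm; auto. apply H; lia. Qed.

Lemma sin_n_le n x : Rabs (sin (INR n * x)) <= INR n * Rabs (sin x).
Proof. induction n. simpl. rewrite Rmult_0_l, sin_0, Rabs_R0; lra.
  rewrite S_INR. replace ((INR n + 1) * x) with (INR n * x + x) by ring. rewrite sin_plus.
  eapply Rle_trans. apply Rabs_triang. rewrite !Rabs_mult.
  pose proof (COS_bound x). pose proof (COS_bound (INR n * x)).
  assert (Rabs (cos x) <= 1) by (apply Rabs_le; lra). assert (Rabs (cos (INR n * x)) <= 1) by (apply Rabs_le; lra).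
  pose proof (Rabs_pos (sin (INR n * x))). pose proof (Rabs_pos (sin x)). nra. Qed.

Lemma cont_left f a d K : continuity_pt f a -> 0 < d -> (forall y, a - d < y < a -> Rabs (f y) <= K) -> Rabs (f a) <= K.
Proof. intros Hc Hd HK. destruct (Rle_dec (Rabs (f a)) K) as [|Hn]; auto. exfalso.
  unfold continuity_pt, continue_in, limit1_in, limit_in in Hc. simpl in Hc.
  destruct (Hc (Rabs (f a) - K)) as [al [Hal H]]. lra.
  set (y := a - Rmin d al / 2). assert (0 < Rmin d al) by (apply Rmin_pos; lra).
  assert (Rmin d al <= d) by apply Rmin_l. assert (Rmin d al <= al) by apply Rmin_r.
  specialize (H y). specialize (HK y ltac:(unfold y; lra)).
  assert (R_dist (f y) (f a) < Rabs (f a) - K). { apply H. split. split; [exact I|]. intro E; unfold y in E; lra.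
    unfold R_dist, y. rewrite Rabs_left; lra. }
  unfold R_dist in H3. pose proof (Rabs_triang_inv (f a) (f y)). rewrite Rabs_minus_sym in H3. lra. Qed.

Lemma cont_right f a d K : continuity_pt f a -> 0 < d -> (forall y, a < y < a + d -> Rabs (f y) <= K) -> Rabs (f a) <= K.
Proof. intros Hc Hd HK. destruct (Rle_dec (Rabs (f a)) K) as [|Hn]; auto. exfalso.
  unfold continuity_pt, continue_in, limit1_in, limit_in in Hc. simpl in Hc.
  destruct (Hc (Rabs (f a) - K)) as [al [Hal H]]. lra.
  set (y := a + Rmin d al / 2). assert (0 < Rmin d al) by (apply Rmin_pos; lra).
  assert (Rmin d al <= d) by apply Rmin_l. assert (Rmin d al <= al) by apply Rmin_r.
  specialize (H y). specialize (HK y ltac:(unfold y; lra)).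
  assert (R_dist (f y) (f a) < Rabs (f a) - K). { apply H. split. split; [exact I|]. intro E; unfold y in E; lra.
    unfold R_dist, y. rewrite Rabs_right; lra. }
  unfold R_dist in H3. pose proof (Rabs_triang_inv (f a) (f y)). rewrite Rabs_minus_sym in H3. lra. Qed.

Lemma acos_lt x : -1 <= x <= 1 -> forall a, 0 <= a <= PI -> cos a < x -> acos x < a.
Proof. intros Hx a Ha Hlt. pose proof (acos_bound x). destruct (Rlt_le_dec (acos x) a); auto.
  exfalso. destruct (Rle_lt_or_eq_dec _ _ r). pose proof (cos_decreasing_1 a (acos x) ltac:(lra) ltac:(lra) ltac:(lra) ltac:(lra) r0).
  rewrite cos_acos in H0 by auto. lra. rewrite e, cos_acos in Hlt by auto. lra. Qed.

Lemma acos_gt x : -1 <= x <= 1 -> forall a, 0 <= a <= PI -> x < cos a -> a < acos x.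
Proof. intros Hx a Ha Hlt. pose proof (acos_bound x). destruct (Rlt_le_dec a (acos x)); auto.
  exfalso. destruct (Rle_lt_or_eq_dec _ _ r). pose proof (cos_decreasing_1 (acos x) a ltac:(lra) ltac:(lra) ltac:(lra) ltac:(lra) r0).
  rewrite cos_acos in H0 by auto. lra. rewrite <- e, cos_acos in Hlt by auto. lra. Qed.

Section Markov.
Variable n : nat.
Hypothesis Hn : (1 <= n)%nat.

Definition xi k := cos (th n k).

Lemma th_bounds k : (k < n)%nat -> 0 < th n k < PI.
Proof. intros Hk. pose proof (INRn_pos n Hn). pose proof PI_RGT_0. unfold th. assert (0 <= INR k) by apply pos_INR.
  assert (INR k + 1 <= INR n) by (rewrite <- S_INR; apply le_INR; lia). split.
  apply Rmult_lt_0_compat. nra. apply Rinv_0_lt_compat; lra.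
  apply Rmult_lt_reg_r with (2 * INR n); [lra|]. field_simplify; nra. Qed.

Lemma th_mono i j : (i < j)%nat -> th n i < th n j.
Proof. intros H. pose proof (INRn_pos n Hn). pose proof PI_RGT_0. unfold th. apply lt_INR in H.
  unfold Rdiv. apply Rmult_lt_compat_r. apply Rinv_0_lt_compat; lra. nra. Qed.

Lemma xi_inj i j : (i < n)%nat -> (j < n)%nat -> xi i = xi j -> i = j.
Proof. intros Hi Hj E. unfold xi in E. pose proof (th_bounds i Hi). pose proof (th_bounds j Hj).
  destruct (Nat.lt_total i j) as [Hl|[Hl|Hl]]; auto; exfalso.
  - pose proof (cos_decreasing_1 (th n i) (th n j) ltac:(lra) ltac:(lra) ltac:(lra) ltac:(lra) (th_mono i j Hl)). lra.
  - pose proof (cos_decreasing_1 (th n j) (th n i) ltac:(lra) ltac:(lra) ltac:(lra) ltac:(lra) (th_mono j i Hl)). lra. Qed.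

Lemma xi_le k : (k < n)%nat -> xi k <= xi 0.
Proof. intros Hk. destruct k. lra. unfold xi. pose proof (th_bounds _ Hk). pose proof (th_bounds 0 ltac:(lia)).
  left. apply cos_decreasing_1; try lra. apply th_mono; lia. Qed.

Lemma sin_n_th k : sin (INR n * th n k) = (-1) ^ k.
Proof. unfold th. replace (INR n * ((2 * INR k + 1) * PI / (2 * INR n))) with (PI / 2 + INR k * PI)
      by (pose proof (INRn_pos n Hn); field; lra).
    rewrite <- cos_sin. apply cos_kPI. Qed.

Lemma Tch_xi k : Tch n (xi k) = 0.
Proof. unfold xi. rewrite Tch_cos. unfold th. replace (INR n * ((2 * INR k + 1) * PI / (2 * INR n))) with (INR k * PI + PI / 2)
      by (pose proof (INRn_pos n Hn); field; lra).
  rewrite cos_plus, cos_PI2, sin_PI2. replace (INR k * PI) with (0 + 2 * INR 0 * PI + INR k * PI) by (simpl; ring).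
  assert (sin (INR k * PI) = 0). { clear. induction k. simpl. rewrite Rmult_0_l; apply sin_0.
    rewrite S_INR. replace ((INR k + 1) * PI) with (INR k * PI + PI) by ring. rewrite neg_sin, IHk. ring. }
  replace (0 + 2 * INR 0 * PI + INR k * PI) with (INR k * PI) by (simpl; ring). rewrite H. ring. Qed.

Section WithDeriv.
Variable dT : R -> R.
Hypothesis HdTP : P n dT.
Hypothesis HdT : forall t, is_derive (Tch n) t (dT t).

Lemma dT_cos x : dT (cos x) * sin x = INR n * sin (INR n * x).
Proof.
  assert (is_derive (fun x => Tch n (cos x)) x (- sin x * dT (cos x))) as H1.
  { eapply D_ext_l; [| | apply (D_comp (Tch n) cos)]; [intros; reflexivity | | apply HdT | apply is_derive_cos]. ring. }
  assert (is_derive (fun x => Tch n (cos x)) x (- (INR n * sin (INR n * x)))) as H2.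
  { apply (is_derive_ext (fun x => cos (INR n * x))). intros; rewrite Tch_cos; auto.
    eapply D_ext_l; [| | apply (D_comp cos (fun x => INR n * x))]; [intros; reflexivity | | apply is_derive_cos |].
    2:{ eapply D_ext_l; [| | apply D_scal, D_id]; [intros; reflexivity | reflexivity]. } ring. }
  apply is_derive_unique in H1. apply is_derive_unique in H2. rewrite H1 in H2. lra. Qed.

Lemma dT_xi k : (k < n)%nat -> dT (xi k) = INR n * (-1) ^ k / sin (th n k).
Proof. intros Hk. pose proof (th_bounds k Hk). pose proof (sin_gt_0 _ (proj1 H) (proj2 H)).
  pose proof (dT_cos (th n k)). rewrite sin_n_th in H1. unfold xi. apply Rmult_eq_reg_r with (sin (th n k)); [| lra]. rewrite H1. field. lra. Qed.

Lemma dT_le x : -1 < x < 1 -> dT x <= INR n ^ 2.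
Proof. intros Hx. pose proof (acos_bound x). set (a := acos x).
  assert (0 < a < PI). { split.
    - apply acos_gt. lra. pose proof PI_RGT_0; lra. rewrite cos_0; lra.
    - apply acos_lt. lra. pose proof PI_RGT_0; lra. rewrite cos_PI; lra. }
  pose proof (sin_gt_0 _ (proj1 H0) (proj2 H0)).
  pose proof (dT_cos a). unfold a in H2. rewrite cos_acos in H2 by lra. fold a in H2.
  pose proof (sin_n_le n a). rewrite (Rabs_pos_eq (sin a)) in H3 by lra.
  pose proof (Rle_abs (sin (INR n * a))). pose proof (INRn_pos n Hn).
  apply Rmult_le_reg_r with (sin a); auto. rewrite H2. nra. Qed.

Variable G : nat -> R -> R.
Hypothesis HGP : forall k, P n (G k).
Hypothesis HG : forall k t, Tch n t = (t - xi k) * G k t + Tch n (xi k).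

Lemma G_node k j : (k < n)%nat -> (j < n)%nat -> j <> k -> G k (xi j) = 0.
Proof. intros Hk Hj Hne. pose proof (HG k (xi j)). rewrite !Tch_xi in H.
  assert (xi j - xi k <> 0). { intro E. apply Hne. apply xi_inj; auto. lra. }
  rewrite Rplus_0_r in H. symmetry in H. apply Rmult_integral in H. destruct H; [contradiction|auto]. Qed.

Lemma P_derivable m f : P m f -> exists df, forall t, is_derive f t (df t).
Proof. intros H. destruct (P_deriv m f (P_S m f H)) as [df [_ Hd]]. exists df; auto. Qed.

Lemma G_diag k : G k (xi k) = dT (xi k).
Proof. destruct (P_derivable n (G k) (HGP k)) as [dG HdG].
  assert (is_derive (Tch n) (xi k) (G k (xi k))).
  { apply (is_derive_ext (fun t => (t - xi k) * G k t + Tch n (xi k))). intros; rewrite <- HG; auto.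
    eapply D_ext_l; [| | apply D_plus; [apply D_mult; [apply D_plus; [apply D_id | apply D_const] | apply HdG] | apply D_const]].
    intros; reflexivity. cbv beta. ring. }
  apply is_derive_unique in H. rewrite (is_derive_unique _ _ _ (HdT (xi k))) in H. auto. Qed.

Lemma G_sum t : sm n (fun k => G k t) = dT t.
Proof.
  assert (forall t, sm n (fun k => G k t) - dT t = 0) as H; [| specialize (H t); lra].
  apply (P_roots n _ xi). apply P_minus; auto. apply P_sm; auto.
  apply xi_inj. intros j Hj. rewrite (sm_single n _ j Hj). rewrite G_diag; ring.
  intros k Hk Hne. apply G_node; auto. Qed.

Lemma dT_xi_nz k : (k < n)%nat -> dT (xi k) <> 0.
Proof. intros Hk. rewrite dT_xi by auto. pose proof (th_bounds k Hk). pose proof (sin_gt_0 _ (proj1 H) (proj2 H)).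
  pose proof (INRn_pos n Hn). assert ((-1) ^ k <> 0) by (apply pow_nonzero; lra).
  unfold Rdiv. apply Rmult_integral_contrapositive_currified; [apply Rmult_integral_contrapositive_currified; lra | apply Rinv_neq_0_compat; lra]. Qed.

Lemma interp q : P n q -> forall t, q t = sm n (fun k => q (xi k) / dT (xi k) * G k t).
Proof. intros Hq.
  assert (forall t, q t - sm n (fun k => q (xi k) / dT (xi k) * G k t) = 0) as H; [| intros t; specialize (H t); lra].
  apply (P_roots n _ xi). apply P_minus; auto. apply P_sm. intros; apply P_scal; auto.
  apply xi_inj. intros j Hj. rewrite (sm_single n _ j Hj). rewrite G_diag. field. apply dT_xi_nz; auto.
  intros k Hk Hne. rewrite G_node; auto. ring. Qed.

Lemma right_region p dp M : P (S n) p -> (forall y, is_derive p y (dp y)) -> P n dp ->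
  (forall y, -1 <= y <= 1 -> Rabs (p y) <= M) ->
  forall x, xi 0 < x < 1 -> Rabs (dp x) <= INR n ^ 2 * M.
Proof. intros Hp Hd Hdp HM x Hx.
  pose proof (th_bounds 0 ltac:(lia)) as Th0.
  assert (-1 <= xi 0 <= 1) by (apply COS_bound).
  assert (Tpos : 0 < Tch n x).
  { rewrite <- (cos_acos x) by lra. rewrite Tch_cos. pose proof (acos_bound x).
    assert (acos x < th n 0) by (apply acos_lt; [lra | lra | exact (proj1 Hx)]).
    apply cos_gt_0. pose proof (INRn_pos n Hn). nra.
    unfold th in H1. simpl INR in H1. replace ((2 * 0 + 1) * PI / (2 * INR n)) with (PI / 2 / INR n) in H1 by (field; pose proof (INRn_pos n Hn); lra).
    pose proof (INRn_pos n Hn). apply Rmult_lt_compat_l with (r := INR n) in H1; auto. field_simplify in H1; lra. }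
  assert (Gpos : forall k, (k < n)%nat -> 0 <= G k x).
  { intros k Hk. pose proof (HG k x). rewrite Tch_xi, Rplus_0_r in H0. pose proof (xi_le k Hk).
    assert (0 < x - xi k) by lra. left. apply Rmult_lt_reg_l with (x - xi k); auto. rewrite <- H0. lra. }
  rewrite (interp dp Hdp x). eapply Rle_trans. apply sm_abs.
  apply Rle_trans with (sm n (fun k => M * G k x)).
  - apply sm_le. intros k Hk. rewrite Rabs_mult, (Rabs_pos_eq (G k x)) by auto.
    apply Rmult_le_compat_r; auto. rewrite dT_xi by auto.
    pose proof (th_bounds k Hk). pose proof (sin_gt_0 _ (proj1 H0) (proj2 H0)). pose proof (INRn_pos n Hn).
    pose proof (bernstein_alg n p dp M Hn Hp Hd HM (th n k)). fold (xi k) in H3.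
    assert ((-1) ^ k <> 0) by (apply pow_nonzero; lra).
    replace (dp (xi k) / (INR n * (-1) ^ k / sin (th n k))) with ((sin (th n k) * dp (xi k)) / ((-1) ^ k * INR n))
      by (field; repeat split; lra).
    unfold Rdiv. rewrite !Rabs_mult, Rabs_inv, Rabs_mult, pow_1_abs, (Rabs_pos_eq (INR n)) by lra.
    apply Rmult_le_reg_r with (INR n); auto. rewrite Rabs_mult in H3. field_simplify; lra.
  - rewrite sm_scal, G_sum. assert (dT x <= INR n ^ 2) by (apply dT_le; lra).
    assert (0 <= M). { specialize (HM x ltac:(lra)). pose proof (Rabs_pos (p x)). lra. }
    nra. Qed.

End WithDeriv.

Lemma th0_eq : th n 0 = PI / (2 * INR n).
Proof. unfold th. simpl INR. field. pose proof (INRn_pos n Hn); lra. Qed.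

Lemma sin_th0 : 1 / INR n <= sin (th n 0).
Proof. rewrite th0_eq. pose proof PI2_3_2. pose proof PI_4. pose proof (INRn_pos n Hn).
  destruct (Nat.eq_dec n 1) as [E|E].
  - rewrite E. simpl INR. replace (PI / (2 * 1)) with (PI / 2) by field. rewrite sin_PI2. lra.
  - assert (2 <= INR n) by (replace 2 with (INR 2) by (simpl; ring); apply le_INR; lia).
    set (a := PI / (2 * INR n)).
    assert (0 < a <= 1). { unfold a. split. apply Rdiv_lt_0_compat; lra.
      apply Rmult_le_reg_r with (2 * INR n); [lra|]. field_simplify; lra. }
    pose proof (sin_bound a 0 ltac:(lra) ltac:(lra)) as [Hs _].
    replace (sin_approx a (2 * 0 + 1)) with (a - a ^ 3 / 6) in Hs by (unfold sin_approx, sin_term; simpl; field).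
    assert (5 * a / 6 <= sin a) by nra.
    assert (1 / INR n <= 5 * a / 6). { unfold a. apply Rmult_le_reg_r with (12 * INR n); [lra|]. field_simplify; lra. }
    lra. Qed.

Lemma acos_ge x a : -1 <= x <= 1 -> 0 <= a <= PI -> x <= cos a -> a <= acos x.
Proof. intros Hx Ha H. pose proof (acos_bound x). destruct (Rle_lt_dec a (acos x)); auto.
  pose proof (cos_decreasing_1 (acos x) a ltac:(lra) ltac:(lra) ltac:(lra) ltac:(lra) r).
  rewrite cos_acos in H1 by auto. lra. Qed.

Lemma acos_le x a : -1 <= x <= 1 -> 0 <= a <= PI -> cos a <= x -> acos x <= a.
Proof. intros Hx Ha H. pose proof (acos_bound x). destruct (Rle_lt_dec (acos x) a); auto.
  pose proof (cos_decreasing_1 a (acos x) ltac:(lra) ltac:(lra) ltac:(lra) ltac:(lra) r).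
  rewrite cos_acos in H1 by auto. lra. Qed.

Lemma P_neg m f : P m f -> P m (fun t => f (- t)).
Proof. intros [c Hc]. exists (fun k => c k * (-1) ^ k). intros t. rewrite Hc. unfold psum. apply sm_ext.
  intros k _. replace (- t) with (-1 * t) by ring. rewrite Rpow_mult_distr. ring. Qed.

Lemma markov_core p dp M : P (S n) p -> (forall y, is_derive p y (dp y)) ->
  (forall y, -1 <= y <= 1 -> Rabs (p y) <= M) ->
  forall x, -1 <= x <= 1 -> Rabs (dp x) <= INR n ^ 2 * M.
Proof. intros Hp Hd HM.
  assert (Hdp : P n dp).
  { destruct (P_deriv n p Hp) as [df [Hdf Hd2]]. apply (P_ext _ df); auto.
    intros t. rewrite <- (is_derive_unique _ _ _ (Hd t)). rewrite (is_derive_unique _ _ _ (Hd2 t)). auto. }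
  destruct (P_deriv n (Tch n) (Tch_P n)) as [dT [HdTP HdT]].
  assert (Hex : forall k, exists g, P n g /\ forall t, Tch n t = (t - xi k) * g t + Tch n (xi k))
    by (intros k; apply P_factor; apply Tch_P).
  set (G := fun k => proj1_sig (constructive_indefinite_description _ (Hex k))).
  assert (HGP : forall k, P n (G k)) by (intros k; unfold G; destruct (constructive_indefinite_description _ (Hex k)) as [g [Hg1 Hg2]]; auto).
  assert (HG : forall k t, Tch n t = (t - xi k) * G k t + Tch n (xi k))
    by (intros k; unfold G; destruct (constructive_indefinite_description _ (Hex k)) as [g [Hg1 Hg2]]; auto).
  pose proof (th_bounds 0 ltac:(lia)) as Th0. pose proof (INRn_pos n Hn) as Hn0.
  assert (0 <= M). { specialize (HM 0 ltac:(lra)). pose proof (Rabs_pos (p 0)). lra. }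
  assert (Hxi : xi 0 < 1). { unfold xi. rewrite <- cos_0. apply cos_decreasing_1; lra. }
  assert (Hth2 : th n 0 <= PI / 2).
  { rewrite th0_eq. assert (1 <= INR n) by (replace 1 with (INR 1) by reflexivity; apply le_INR; lia).
    pose proof PI_RGT_0. apply Rmult_le_reg_r with (2 * INR n); [lra|]. field_simplify; nra. }
  assert (Hxi2 : 0 <= xi 0) by (unfold xi; apply cos_ge_0; lra).
  assert (Int : forall x, -1 < x < 1 -> Rabs (dp x) <= INR n ^ 2 * M).
  { intros x Hx. destruct (Rlt_le_dec (xi 0) x) as [H1|H1].
    - apply (right_region dT HdTP HdT G HGP HG p dp M Hp Hd Hdp HM); lra.
    - destruct (Rlt_le_dec x (- xi 0)) as [H2|H2].
      + set (q := fun t => p (- t)). set (dq := fun t => - dp (- t)).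
        assert (Hq : P (S n) q) by (apply P_neg; auto).
        assert (Hdq' : P n dq) by (apply P_opp; apply P_neg; auto).
        assert (Hqd : forall y, is_derive q y (dq y)).
        { intros y. eapply D_ext_l; [| | apply (D_comp p (fun t => - t))]; [intros; reflexivity | | apply Hd |].
          2:{ eapply D_ext_l; [| | exact (D_scal (fun t => t) y 1 (-1) (D_id y))]; [intros t0; cbv beta; ring | reflexivity]. } unfold dq; ring. }
        assert (HqM : forall y, -1 <= y <= 1 -> Rabs (q y) <= M) by (intros y Hy; apply HM; lra).
        pose proof (right_region dT HdTP HdT G HGP HG q dq M Hq Hqd Hdq' HqM (- x) ltac:(lra)) as Hrr.
        unfold dq in Hrr. rewrite Ropp_involutive, Rabs_Ropp in Hrr. auto.
      + set (a := acos x). pose proof (acos_bound x).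
        assert (th n 0 <= a) by (apply acos_ge; [lra|lra|auto]).
        assert (a <= PI - th n 0) by (apply acos_le; [lra|lra|]; rewrite Rtrigo_facts.cos_pi_minus; fold (xi 0); lra).
        assert (Hs : sin (th n 0) <= sin a).
        { destruct (Rle_lt_dec a (PI / 2)).
          apply sin_incr_1; try lra.
          rewrite <- (sin_PI_x a). apply sin_incr_1; try lra. }
        pose proof sin_th0 as Hs0.
        pose proof (bernstein_alg n p dp M Hn Hp Hd HM a) as Hb. unfold a in Hb at 2. rewrite cos_acos in Hb by lra.
        assert (0 < 1 / INR n) by (apply Rdiv_lt_0_compat; lra).
        rewrite Rabs_mult, (Rabs_pos_eq (sin a)) in Hb by lra.
        assert (1 <= INR n * sin a).
        { apply Rle_trans with (INR n * (1 / INR n)). right; field; lra. apply Rmult_le_compat_l; lra. }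
        pose proof (Rabs_pos (dp x)). nra. }
  destruct (P_derivable n dp Hdp) as [ddp Hddp].
  assert (Hc : forall t, continuity_pt dp t) by (apply P_cont with n; auto).
  intros x Hx. destruct (Req_dec x 1) as [->|E1].
  - apply (cont_left dp 1 2); auto; [lra|]. intros; apply Int; lra.
  - destruct (Req_dec x (-1)) as [->|E2].
    + apply (cont_right dp (-1) 2); auto; [lra|]. intros; apply Int; lra.
    + apply Int; lra. Qed.

End Markov.

Lemma lub_of_spec E : bound E -> (exists x, E x) -> is_lub E (lub_of E).
Proof. intros Hb He. unfold lub_of. apply epsilon_spec.
  destruct (completeness E Hb He) as [m Hm]. exists m; auto. Qed.

Definition BI (f : R -> R) := exists K, forall t, -1 <= t <= 1 -> Rabs (f t) <= K.

Lemma sup_set_bound f : BI f -> bound (fun y => exists t, -1 <= t <= 1 /\ y = Rabs (f t)).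
Proof. intros [K HK]. exists K. intros y [t [Ht ->]]. auto. Qed.
Lemma sup_set_ne f : exists y, (fun y => exists t, -1 <= t <= 1 /\ y = Rabs (f t)) y.
Proof. exists (Rabs (f 0)). exists 0. split; [lra|auto]. Qed.

Lemma sup_norm_ge f : BI f -> forall t, -1 <= t <= 1 -> Rabs (f t) <= sup_norm f.
Proof. intros Hb t Ht. destruct (lub_of_spec _ (sup_set_bound f Hb) (sup_set_ne f)) as [H1 _].
  apply H1. exists t; auto. Qed.

Lemma sup_norm_le f K : BI f -> (forall t, -1 <= t <= 1 -> Rabs (f t) <= K) -> sup_norm f <= K.
Proof. intros Hb HK. destruct (lub_of_spec _ (sup_set_bound f Hb) (sup_set_ne f)) as [_ H2].
  apply H2. intros y [t [Ht ->]]. auto. Qed.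

Lemma sup_norm_nonneg f : BI f -> 0 <= sup_norm f.
Proof. intros Hb. pose proof (sup_norm_ge f Hb 0 ltac:(lra)). pose proof (Rabs_pos (f 0)). lra. Qed.

Definition RC (f : R -> R) := forall t, -1 <= t <= 1 -> continuous_on_I_at f t.

Lemma RC_minus f g : RC f -> RC g -> RC (fun t => f t - g t).
Proof. intros Hf Hg t Ht eps He. destruct (Hf t Ht (eps/2) ltac:(lra)) as [d1 [Hd1 H1]].
  destruct (Hg t Ht (eps/2) ltac:(lra)) as [d2 [Hd2 H2]]. exists (Rmin d1 d2). split. apply Rmin_pos; auto.
  intros s Hs Hst. pose proof (Rmin_l d1 d2). pose proof (Rmin_r d1 d2).
  specialize (H1 s Hs ltac:(lra)). specialize (H2 s Hs ltac:(lra)).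
  replace (f s - g s - (f t - g t)) with ((f s - f t) - (g s - g t)) by ring.
  eapply Rle_lt_trans. apply Rabs_triang. rewrite Rabs_Ropp. lra. Qed.

Lemma RC_cont f : (forall t, continuity_pt f t) -> RC f.
Proof. intros Hc t Ht eps He. specialize (Hc t). unfold continuity_pt, continue_in, limit1_in, limit_in in Hc. simpl in Hc.
  destruct (Hc eps He) as [d [Hd H]]. exists d. split; auto. intros s Hs Hst.
  destruct (Req_dec s t) as [->|Hne]. unfold Rminus. rewrite Rplus_opp_r, Rabs_R0; auto.
  apply H. split. split; [exact I | auto]. auto. Qed.

Definition clamp t := Rmax (-1) (Rmin 1 t).
Lemma clamp_in t : -1 <= clamp t <= 1.
Proof. unfold clamp. unfold Rmax, Rmin. repeat destruct Rle_dec; lra. Qed.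
Lemma clamp_id t : -1 <= t <= 1 -> clamp t = t.
Proof. intros. unfold clamp, Rmax, Rmin. repeat destruct Rle_dec; lra. Qed.
Lemma clamp_lip s t : Rabs (clamp s - clamp t) <= Rabs (s - t).
Proof. unfold clamp, Rmax, Rmin. repeat destruct Rle_dec; unfold Rabs; repeat destruct Rcase_abs; lra. Qed.

Lemma RC_bounded f : RC f -> BI f.
Proof. intros Hf. set (g := fun t => f (clamp t)).
  assert (Hg : forall t, continuity_pt g t).
  { intros t. unfold continuity_pt, continue_in, limit1_in, limit_in. simpl. intros eps He.
    destruct (Hf (clamp t) (clamp_in t) eps He) as [d [Hd H]]. exists d. split; auto.
    intros s [_ Hs]. unfold R_dist, g. apply H. apply clamp_in. pose proof (clamp_lip s t). unfold R_dist in Hs. lra. }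
  destruct (continuity_ab_maj g (-1) 1 ltac:(lra) (fun c _ => Hg c)) as [M1 [HM1 _]].
  destruct (continuity_ab_min g (-1) 1 ltac:(lra) (fun c _ => Hg c)) as [M2 [HM2 _]].
  exists (Rmax (Rabs (g M1)) (Rabs (g M2))). intros t Ht.
  specialize (HM1 t Ht). specialize (HM2 t Ht). unfold g in *. rewrite (clamp_id t Ht) in HM1, HM2.
  pose proof (Rmax_l (Rabs (f (clamp M1))) (Rabs (f (clamp M2)))). pose proof (Rmax_r (Rabs (f (clamp M1))) (Rabs (f (clamp M2)))).
  pose proof (Rle_abs (f (clamp M1))). pose proof (Rabs_pos (f (clamp M2))).
  assert (- Rabs (f (clamp M2)) <= f (clamp M2)) by (pose proof (Rle_abs (- f (clamp M2))) as Hq; rewrite Rabs_Ropp in Hq; lra).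
  apply Rabs_le. lra. Qed.

Lemma cont_I_lim f a K : -1 <= a <= 1 -> continuous_on_I_at f a -> (forall y, -1 < y < 1 -> Rabs (f y) <= K) -> Rabs (f a) <= K.
Proof. intros Ha Hc HK. destruct (Rle_dec (Rabs (f a)) K) as [|Hn]; auto. exfalso.
  destruct (Hc (Rabs (f a) - K) ltac:(lra)) as [d [Hd H]].
  set (m := Rmin d 1). assert (0 < m) by (apply Rmin_pos; lra). assert (m <= d) by apply Rmin_l. assert (m <= 1) by apply Rmin_r.
  set (y := if Rle_dec 0 a then a - m / 2 else a + m / 2).
  assert (Hy : -1 < y < 1) by (unfold y; destruct Rle_dec; lra).
  assert (Hy2 : Rabs (y - a) < d) by (unfold y; destruct Rle_dec; [rewrite Rabs_left | rewrite Rabs_right]; lra).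
  specialize (H y ltac:(lra) Hy2). specialize (HK y Hy).
  pose proof (Rabs_triang_inv (f a) (f y)). rewrite Rabs_minus_sym in H. lra. Qed.

Lemma deriv_I_cont f df : (forall t, -1 <= t <= 1 -> has_deriv_on_I f t (df t)) -> RC f.
Proof. intros Hd t Ht eps He. destruct (Hd t Ht 1 ltac:(lra)) as [d1 [Hd1 H1]].
  set (L := Rabs (df t) + 1). assert (0 < L) by (unfold L; pose proof (Rabs_pos (df t)); lra).
  exists (Rmin d1 (eps / L)). split. apply Rmin_pos; auto. apply Rdiv_lt_0_compat; auto.
  intros s Hs Hst. pose proof (Rmin_l d1 (eps / L)). pose proof (Rmin_r d1 (eps / L)).
  destruct (Req_dec s t) as [->|Hne]. unfold Rminus; rewrite Rplus_opp_r, Rabs_R0; auto.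
  specialize (H1 (s - t) ltac:(lra) ltac:(lra) ltac:(replace (t + (s - t)) with s by ring; auto)).
  replace (t + (s - t)) with s in H1 by ring.
  assert (Hp : Rabs (s - t) > 0) by (apply Rabs_pos_lt; lra).
  assert (Hq : Rabs ((f s - f t) / (s - t)) < L).
  { pose proof (Rabs_triang_inv ((f s - f t) / (s - t)) (df t)). unfold L. lra. }
  unfold Rdiv in Hq. rewrite Rabs_mult, Rabs_inv in Hq.
  assert (Hr : Rabs (f s - f t) < L * Rabs (s - t)).
  { apply Rmult_lt_reg_r with (/ Rabs (s - t)). apply Rinv_0_lt_compat; lra.
    rewrite Rmult_assoc, Rinv_r by lra. lra. }
  assert (Hw : L * Rabs (s - t) < L * (eps / L)) by (apply Rmult_lt_compat_l; lra).
  replace (L * (eps / L)) with eps in Hw by (field; lra). lra. Qed.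

Lemma deriv_I_interior f s l : -1 < s < 1 -> has_deriv_on_I f s l -> is_derive f s l.
Proof. intros Hs Hd. apply is_derive_Reals. intros eps He. destruct (Hd eps He) as [d [Hd0 H]].
  assert (0 < Rmin d (Rmin (1 - s) (1 + s))) by (repeat apply Rmin_pos; lra).
  exists (mkposreal _ H0). simpl. intros h Hh Hh2.
  pose proof (Rmin_l d (Rmin (1 - s) (1 + s))). pose proof (Rmin_r d (Rmin (1 - s) (1 + s))).
  pose proof (Rmin_l (1 - s) (1 + s)). pose proof (Rmin_r (1 - s) (1 + s)).
  apply H; auto. lra. pose proof (Rabs_def2 h (Rmin d (Rmin (1 - s) (1 + s))) Hh2). lra. Qed.

Lemma P_mul2 a f g : P a f -> P 2 g -> P (S a) (fun t => f t * g t).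
Proof. intros Hf [c Hc]. apply (P_ext _ (fun t => c O * f t + c 1%nat * (t * f t))).
  intros t. rewrite Hc. unfold psum. simpl. ring.
  apply P_plus. apply P_S, P_scal; auto. apply P_scal, P_mul_t; auto. Qed.

Lemma prod_P m (F : nat -> R -> R) : (forall j, (j <= m)%nat -> P 2 (F j)) ->
  P (S (S m)) (fun t => prod_f_R0 (fun j => F j t) m).
Proof. induction m; intros H. apply (P_ext _ (F 0%nat)); [reflexivity| apply H; lia].
  apply (P_ext _ (fun t => prod_f_R0 (fun j => F j t) m * F (S m) t)); [reflexivity|]. apply P_mul2. apply IHm; intros; apply H; lia. apply H; lia. Qed.

Lemma prod_P_exc m i (F : nat -> R -> R) : (i <= m)%nat -> (forall j, (j <= m)%nat -> j <> i -> P 2 (F j)) ->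
  (forall t, F i t = 1) -> P (S m) (fun t => prod_f_R0 (fun j => F j t) m).
Proof. induction m; intros Hi H H1.
  - assert (i = 0%nat) by lia. subst. apply (P_ext _ (fun _ => 1)). intros; simpl; rewrite H1; auto. apply P_const.
  - apply (P_ext _ (fun t => prod_f_R0 (fun j => F j t) m * F (S m) t)); [reflexivity|]. destruct (Nat.eq_dec i (S m)) as [->|Hne].
    + apply (P_ext _ (fun t => prod_f_R0 (fun j => F j t) m)). intros; rewrite H1; ring.
      apply prod_P. intros; apply H; lia.
    + apply P_mul2. apply IHm; [lia | intros; apply H; lia | auto]. apply H; lia. Qed.

Lemma prod_one m F : (forall j, (j <= m)%nat -> F j = 1) -> prod_f_R0 F m = 1.
Proof. induction m; intros H; simpl. apply H; lia. rewrite IHm, H; [ring|lia|intros; apply H; lia]. Qed.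

Lemma prod_zero m F j : (j <= m)%nat -> F j = 0 -> prod_f_R0 F m = 0.
Proof. induction m; intros Hj H; simpl. replace j with 0%nat in H by lia. auto.
  destruct (Nat.eq_dec j (S m)) as [->|Hne]. rewrite H; ring. rewrite IHm; [ring|lia|auto]. Qed.

Section Lag.
Variable N : nat.
Variable tau : nat -> R.
Hypothesis Hinj : forall i j, (i <= N)%nat -> (j <= N)%nat -> tau i = tau j -> i = j.

Lemma lag_P i : (i <= N)%nat -> P (S N) (lagrange N tau i).
Proof. intros Hi. unfold lagrange.
  apply (prod_P_exc N i (fun j t => if Nat.eqb j i then 1 else (t - tau j) / (tau i - tau j))); auto.
  - intros j Hj Hne. destruct (Nat.eqb_spec j i); [contradiction|].
    apply (P_ext _ (fun t => / (tau i - tau j) * (t * 1) + (- tau j / (tau i - tau j)))).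
    intros t. unfold Rdiv. ring. apply P_plus. apply P_scal, P_mul_t, P_const. apply P_S, P_const.
  - intros t. rewrite Nat.eqb_refl. auto. Qed.

Lemma lag_node i k : (i <= N)%nat -> (k <= N)%nat -> lagrange N tau i (tau k) = if Nat.eqb k i then 1 else 0.
Proof. intros Hi Hk. unfold lagrange. destruct (Nat.eqb_spec k i) as [->|Hne].
  - apply prod_one. intros j Hj. destruct (Nat.eqb_spec j i). auto.
    assert (tau i - tau j <> 0). { intro E. apply n. symmetry. apply Hinj; auto. lra. } field; auto.
  - apply (prod_zero _ _ k Hk). rewrite (proj2 (Nat.eqb_neq k i) Hne). unfold Rminus. rewrite Rplus_opp_r. unfold Rdiv. ring. Qed.

Lemma interp_lag f c : (forall k, (k <= N)%nat -> poly_eval N c (tau k) = f (tau k)) ->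
  forall p t, poly_eval N c t - poly_eval N p t = sm (S N) (fun k => (f (tau k) - poly_eval N p (tau k)) * lagrange N tau k t).
Proof. intros Hc p.
  assert (forall t, poly_eval N c t - poly_eval N p t - sm (S N) (fun k => (f (tau k) - poly_eval N p (tau k)) * lagrange N tau k t) = 0) as H;
   [| intros t; specialize (H t); lra].
  apply (P_roots (S N) _ tau).
  - apply P_minus. apply P_minus.
    apply (P_ext _ (psum (S N) c)); [intros; rewrite poly_eval_psum; reflexivity| apply P_psum].
    apply (P_ext _ (psum (S N) p)); [intros; rewrite poly_eval_psum; reflexivity| apply P_psum].
    apply P_sm. intros k Hk. apply P_scal, lag_P. lia.
  - intros i j Hi Hj E. apply Hinj; auto; lia.
  - intros j Hj. rewrite (sm_single (S N) _ j Hj). rewrite lag_node by lia. rewrite Nat.eqb_refl. rewrite Hc by lia. ring.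
    intros k Hk Hne. rewrite lag_node by lia. rewrite (proj2 (Nat.eqb_neq j k)) by auto. ring. Qed.

End Lag.

Lemma glb_approx E : (exists y, E y) -> (forall y, E y -> 0 <= y) ->
  forall eps, 0 < eps -> exists y, E y /\ y < glb_of E + eps.
Proof. intros [y0 Hy0] Hpos eps He. unfold glb_of.
  set (E' := fun y => E (- y)).
  assert (Hb : bound E'). { exists 0. intros y Hy. apply Hpos in Hy. lra. }
  assert (Hne : exists y, E' y). { exists (- y0). unfold E'. rewrite Ropp_involutive. auto. }
  destruct (lub_of_spec E' Hb Hne) as [H1 H2]. fold E' in H1, H2 |- *.
  destruct (classic (exists y, E y /\ y < - lub_of E' + eps)) as [|Hn]; auto. exfalso.
  assert (is_upper_bound E' (lub_of E' - eps)).
  { intros z Hz. destruct (Rle_dec z (lub_of E' - eps)); auto. exfalso. apply Hn. exists (- z). split; auto. lra. }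
  apply H2 in H. lra. Qed.

Lemma BI_sum m (F : nat -> R -> R) : (forall j, (j < m)%nat -> BI (F j)) -> BI (fun t => sm m (fun j => Rabs (F j t))).
Proof. induction m; intros H. exists 0. intros; simpl; rewrite Rabs_R0; lra.
  destruct IHm as [K1 H1]. intros; apply H; lia. destruct (H m ltac:(lia)) as [K2 H2].
  exists (K1 + K2). intros t Ht. simpl. specialize (H1 t Ht). specialize (H2 t Ht).
  assert (0 <= sm m (fun j => Rabs (F j t))) by (apply sm_nonneg; intros; apply Rabs_pos).
  rewrite Rabs_pos_eq in H1 by auto. rewrite Rabs_pos_eq by (pose proof (Rabs_pos (F m t)); lra).
  lra. Qed.

Lemma RC_P n f : P n f -> RC f.
Proof. intros H. apply RC_cont. apply (P_cont n); auto. Qed.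

Lemma RC_poly N c : RC (poly_eval N c).
Proof. apply (RC_P (S N)). apply (P_ext _ (psum (S N) c)). intros; rewrite poly_eval_psum; auto. apply P_psum. Qed.

Lemma RC_polyd N c : RC (poly_deriv N c).
Proof. apply (RC_P N). apply (P_ext _ (psum N (fun k => INR (S k) * c (S k)))). intros; rewrite poly_deriv_psum; auto. apply P_psum. Qed.

Theorem proposition2p1 (N : nat) (tau : nat -> R) (x dx : R -> R) (cN : nat -> R) :
  (1 <= N)%nat ->
  -1 <= tau 0%nat ->
  tau N <= 1 ->
  (forall i, (i < N)%nat -> tau i < tau (S i)) ->
  (forall t, -1 <= t <= 1 -> has_deriv_on_I x t (dx t)) ->
  (forall t, -1 <= t <= 1 -> continuous_on_I_at dx t) ->
  (forall k, (k <= N)%nat -> poly_eval N cN (tau k) = x (tau k)) ->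
  sup_norm (fun t => dx t - poly_deriv N cN t)
  <= (1 + 2 * INR N ^ 2) *
       glb_of (fun y => exists q : nat -> R,
                  y = sup_norm (fun t => dx t - poly_deriv N q t))
     + INR N ^ 2 * (1 + lebesgue_const N tau) *
       glb_of (fun y => exists p : nat -> R,
                  y = sup_norm (fun t => x t - poly_eval N p t)).
Proof.
  intros HN Ht0 HtN Hmono Hdx Hcont Hint.
  assert (Hlt : forall i j, (i < j)%nat -> (j <= N)%nat -> tau i < tau j).
  { intros i j Hij. induction Hij; intros Hj. apply Hmono; lia.
    apply Rlt_trans with (tau m). apply IHHij; lia. apply Hmono; lia. }
  assert (Hle0 : forall k, (k <= N)%nat -> tau 0%nat <= tau k).
  { intros k Hk. destruct k. lra. left; apply Hlt; lia. }
  assert (HleN : forall k, (k <= N)%nat -> tau k <= tau N).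
  { intros k Hk. destruct (Nat.eq_dec k N) as [->|]. lra. left; apply Hlt; lia. }
  assert (Hin : forall k, (k <= N)%nat -> -1 <= tau k <= 1).
  { intros k Hk. specialize (Hle0 k Hk). specialize (HleN k Hk). lra. }
  assert (Hinj : forall i j, (i <= N)%nat -> (j <= N)%nat -> tau i = tau j -> i = j).
  { intros i j Hi Hj E. destruct (Nat.lt_total i j) as [H|[H|H]]; auto.
    specialize (Hlt i j H Hj). lra. specialize (Hlt j i H Hi). lra. }
  assert (RCx : RC x) by (apply (deriv_I_cont x dx); auto).
  assert (RCdx : RC dx) by (intros t Ht; apply Hcont; auto).
  set (Lam := lebesgue_const N tau).
  assert (HBL : BI (fun t => sm (S N) (fun j => Rabs (lagrange N tau j t)))).
  { apply BI_sum. intros j Hj. apply RC_bounded. apply (RC_P (S N)). apply lag_P; auto. lia. }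
  assert (HLam : forall t, -1 <= t <= 1 -> sm (S N) (fun j => Rabs (lagrange N tau j t)) <= Lam).
  { intros t Ht. unfold Lam, lebesgue_const.
    set (E := fun y => exists t, -1 <= t <= 1 /\ y = sum_f_R0 (fun j => Rabs (lagrange N tau j t)) N).
    assert (Hb : bound E). { destruct HBL as [K HK]. exists K. intros y [s [Hs ->]]. rewrite sum_f_R0_sm.
      specialize (HK s Hs). pose proof (Rle_abs (sm (S N) (fun j => Rabs (lagrange N tau j s)))). lra. }
    assert (He : exists y, E y). { exists (sum_f_R0 (fun j => Rabs (lagrange N tau j 0)) N). exists 0. split; [lra|auto]. }
    destruct (lub_of_spec E Hb He) as [H1 _]. rewrite <- sum_f_R0_sm. apply H1. exists t; auto. }
  assert (HLam0 : 0 <= Lam).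
  { eapply Rle_trans; [| apply (HLam 0); lra]. apply sm_nonneg. intros; apply Rabs_pos. }
  set (LHS := sup_norm (fun t => dx t - poly_deriv N cN t)).
  assert (BIl : BI (fun t => dx t - poly_deriv N cN t)) by (apply RC_bounded, RC_minus; auto; apply RC_polyd).
  assert (Key : forall q p, LHS <= (1 + 2 * INR N ^ 2) * sup_norm (fun t => dx t - poly_deriv N q t)
                  + INR N ^ 2 * (1 + Lam) * sup_norm (fun t => x t - poly_eval N p t)).
  { intros q p.
    set (Sq := sup_norm (fun t => dx t - poly_deriv N q t)).
    set (Sp := sup_norm (fun t => x t - poly_eval N p t)).
    assert (BIq : BI (fun t => dx t - poly_deriv N q t)) by (apply RC_bounded, RC_minus; auto; apply RC_polyd).
    assert (BIp : BI (fun t => x t - poly_eval N p t)) by (apply RC_bounded, RC_minus; auto; apply RC_poly).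
    pose proof (sup_norm_ge _ BIq) as Gq. fold Sq in Gq.
    pose proof (sup_norm_ge _ BIp) as Gp. fold Sp in Gp.
    pose proof (sup_norm_nonneg _ BIq) as Sq0. fold Sq in Sq0.
    pose proof (sup_norm_nonneg _ BIp) as Sp0. fold Sp in Sp0.
    set (c := x 0 - poly_eval N q 0).
    set (f := fun t => x t - poly_eval N q t - c).
    assert (Hf : forall t, -1 <= t <= 1 -> Rabs (f t) <= Sq).
    { assert (Hfi : forall t, -1 < t < 1 -> Rabs (f t) <= Sq).
      { intros t Ht.
        assert (Hder : forall s, -1 < s < 1 -> is_derive f s (dx s - poly_deriv N q s)).
        { intros s Hs. unfold f. eapply D_ext_l; [| | apply D_plus; [apply D_plus; [apply (deriv_I_interior x s (dx s)); [auto | apply Hdx; lra] | exact (D_scal (poly_eval N q) s (poly_deriv N q s) (-1) (poly_eval_deriv N q s))] | exact (D_const (- c) s)]].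
          intros; cbv beta; ring. cbv beta; ring. }
        destruct (MVT_gen f 0 t (fun s => dx s - poly_deriv N q s)) as [m [Hm E]].
        - intros s Hs. apply Hder. pose proof (Rmin_l 0 t). pose proof (Rmin_r 0 t). pose proof (Rmax_l 0 t). pose proof (Rmax_r 0 t).
          unfold Rmin, Rmax in *. destruct Rle_dec; lra.
        - intros s Hs. assert (-1 < s < 1) by (unfold Rmin, Rmax in *; destruct Rle_dec; lra).
          apply continuity_pt_filterlim. apply (ex_derive_continuous f s). eexists; apply Hder; auto.
        - assert (f 0 = 0) by (unfold f, c; ring). rewrite H, Rminus_0_r, Rminus_0_r in E. rewrite E.
          rewrite Rabs_mult. assert (-1 <= m <= 1) by (unfold Rmin, Rmax in *; destruct Rle_dec; lra).
          specialize (Gq m H0). assert (Rabs t <= 1) by (apply Rabs_le; lra).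
          pose proof (Rabs_pos t). pose proof (Rabs_pos (dx m - poly_deriv N q m)). nra. }
      intros t Ht. apply cont_I_lim; auto. unfold f. apply RC_minus. apply RC_minus; auto. apply RC_poly.
      intros s Hs e He. exists 1. split; [lra|]. intros; unfold Rminus; rewrite Rplus_opp_r, Rabs_R0; auto. auto. }
    assert (Hx : forall t, -1 <= t <= 1 -> Rabs (x t - poly_eval N cN t) <= (1 + Lam) * Sp).
    { intros t Ht. pose proof (interp_lag N tau Hinj x cN Hint p t) as E.
      replace (x t - poly_eval N cN t) with ((x t - poly_eval N p t) - (poly_eval N cN t - poly_eval N p t)) by ring.
      rewrite E. eapply Rle_trans. apply Rabs_triang. rewrite Rabs_Ropp.
      assert (Rabs (sm (S N) (fun k => (x (tau k) - poly_eval N p (tau k)) * lagrange N tau k t)) <= Sp * Lam).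
      { eapply Rle_trans. apply sm_abs. apply Rle_trans with (sm (S N) (fun k => Sp * Rabs (lagrange N tau k t))).
        apply sm_le. intros k Hk. rewrite Rabs_mult. apply Rmult_le_compat_r. apply Rabs_pos. apply Gp. apply Hin; lia.
        rewrite sm_scal. apply Rmult_le_compat_l; auto. }
      specialize (Gp t Ht). nra. }
    set (h := fun t => poly_eval N q t + c - poly_eval N cN t).
    set (dh := fun t => poly_deriv N q t - poly_deriv N cN t).
    assert (Hh : P (S N) h).
    { unfold h. apply P_minus. apply P_plus. apply (P_ext _ (psum (S N) q)); [intros; rewrite poly_eval_psum; auto| apply P_psum].
      apply (P_le 1); [lia| apply P_const]. apply (P_ext _ (psum (S N) cN)); [intros; rewrite poly_eval_psum; auto| apply P_psum]. }
    assert (Hdh : forall y, is_derive h y (dh y)).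
    { intros y. unfold h, dh. eapply D_ext_l; [| | apply D_plus; [apply D_plus; [apply (poly_eval_deriv N q) | exact (D_const c y)] | exact (D_scal (poly_eval N cN) y (poly_deriv N cN y) (-1) (poly_eval_deriv N cN y))]].
      intros; cbv beta; ring. cbv beta; ring. }
    assert (HhM : forall y, -1 <= y <= 1 -> Rabs (h y) <= Sq + (1 + Lam) * Sp).
    { intros y Hy. unfold h. replace (poly_eval N q y + c - poly_eval N cN y) with (- f y + (x y - poly_eval N cN y)) by (unfold f; ring).
      eapply Rle_trans. apply Rabs_triang. rewrite Rabs_Ropp. specialize (Hf y Hy). specialize (Hx y Hy). lra. }
    pose proof (markov_core N HN h dh _ Hh Hdh HhM) as Mk.
    unfold LHS. apply sup_norm_le; auto. intros t Ht.
    replace (dx t - poly_deriv N cN t) with ((dx t - poly_deriv N q t) + dh t) by (unfold dh; ring).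
    eapply Rle_trans. apply Rabs_triang. specialize (Mk t Ht). specialize (Gq t Ht).
    assert (0 <= INR N ^ 2) by (apply pow2_ge_0). nra. }
  set (Eq := fun y => exists q : nat -> R, y = sup_norm (fun t => dx t - poly_deriv N q t)).
  set (Ep := fun y => exists p : nat -> R, y = sup_norm (fun t => x t - poly_eval N p t)).
  assert (Eq_pos : forall y, Eq y -> 0 <= y).
  { intros y [q ->]. apply sup_norm_nonneg. apply RC_bounded, RC_minus; auto; apply RC_polyd. }
  assert (Ep_pos : forall y, Ep y -> 0 <= y).
  { intros y [p ->]. apply sup_norm_nonneg. apply RC_bounded, RC_minus; auto; apply RC_poly. }
  assert (Eq_ne : exists y, Eq y) by (exists (sup_norm (fun t => dx t - poly_deriv N (fun _ => 0) t)); exists (fun _ => 0); auto).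
  assert (Ep_ne : exists y, Ep y) by (exists (sup_norm (fun t => x t - poly_eval N (fun _ => 0) t)); exists (fun _ => 0); auto).
  fold Eq Ep. fold LHS.
  set (a := 1 + 2 * INR N ^ 2). set (b := INR N ^ 2 * (1 + Lam)).
  assert (Ha : 0 <= a) by (unfold a; pose proof (pow2_ge_0 (INR N)); lra).
  assert (Hb : 0 <= b) by (unfold b; apply Rmult_le_pos; [apply pow2_ge_0 | lra]).
  assert (forall eps, 0 < eps -> LHS <= a * glb_of Eq + b * glb_of Ep + (a + b) * eps).
  { intros eps He. destruct (glb_approx Eq Eq_ne Eq_pos eps He) as [y1 [[q ->] Hq]].
    destruct (glb_approx Ep Ep_ne Ep_pos eps He) as [y2 [[p ->] Hp]].
    specialize (Key q p). fold a b in Key. nra. }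
  destruct (Rle_dec LHS (a * glb_of Eq + b * glb_of Ep)) as [|Hn]; auto. exfalso.
  set (d := LHS - (a * glb_of Eq + b * glb_of Ep)).
  assert (0 < d) by (unfold d; lra).
  specialize (H (d / (2 * (a + b + 1))) ltac:(apply Rdiv_lt_0_compat; lra)).
  assert ((a + b) * (d / (2 * (a + b + 1))) < d).
  { apply Rmult_lt_reg_r with (2 * (a + b + 1)); [lra|]. field_simplify; [nra | lra]. }
  unfold d in *. lra.
Qed.
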